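(* Let $u_{\varepsilon,\ell}$ be a 3iet word with parameters $\varepsilon,\ell$ and let ${\rm ind}(u_{\varepsilon,\ell})=+\infty$. Then $\sup_{n\in\mathbb N} a_n = +\infty$, where $a_n$ are the partial quotients of the continued fraction $\varepsilon=[0,a_1,a_2,\dots]$.
   Context: Parameters $\varepsilon,\ell$ satisfy $\varepsilon\in(0,1)\setminus\mathbb Q$ and $\max\{\varepsilon,1-\varepsilon\}<\ell<1$. The three interval exchange $T_{\varepsilon,\ell}:[0,\ell)\to[0,\ell)$ is defined by $T_{\varepsilon,\ell}(x)=x+1-\varepsilon$ for $x\in I_A:=[0,\ell-1+\varepsilon)$, $T_{\varepsilon,\ell}(x)=x+1-2\varepsilon$ for $x\in I_B:=[\ell-1+\varepsilon,\varepsilon)$, and $T_{\varepsilon,\ell}(x)=x-\varepsilon$ for $x\in I_C:=[\varepsilon,\ell)$. A 3iet word with parameters $\varepsilon,\ell$ is the word $u=(u_n)_{n\in\mathbb N}$ over $\{A,B,C\}$ with $u_n=X$ iff $T_{\varepsilon,\ell}^n(x_0)\in I_X$, for some $x_0\in[0,\ell)$; its language and index do not depend on $x_0$. A word $v$ is a power $w^r$ ($r=|v|/|w|$) if $|v|\ge|w|$ and $v$ is a prefix of $www\cdots$; ${\rm ind}(w)=\sup\{r\in\mathbb Q: w^r \text{ is a factor of } u\}$ and ${\rm ind}(u)=\sup\{{\rm ind}(w): w \text{ a factor of } u\}$. *)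

(* Defs.v *)
From Stdlib Require Import Reals List Arith ZArith.
Open Scope R_scope.

Inductive letter := A | B | C.

(* floor via Stdlib's [up]: up x is the unique integer with x < up x <= x + 1 *)
Definition floorR (x : R) : Z := (up x - 1)%Z.

Definition irrational (x : R) : Prop :=
  ~ exists (p q : Z), q <> 0%Z /\ x = IZR p / IZR q.

Definition T3 (eps l x : R) : R :=
  if Rlt_dec x (l - 1 + eps) then x + 1 - eps
  else if Rlt_dec x eps then x + 1 - 2 * eps
  else x - eps.

Definition letter_of (eps l x : R) : letter :=
  if Rlt_dec x (l - 1 + eps) then A
  else if Rlt_dec x eps then B
  else C.

Definition iet3_word (eps l x0 : R) (n : nat) : letter :=
  letter_of eps l (Nat.iter n (T3 eps l) x0).

Definition factor (u : nat -> letter) (v : list letter) : Prop :=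
  exists i : nat, forall k : nat, (k < length v)%nat -> nth k v A = u (i + k)%nat.

(* v is a power w^r (r = |v|/|w|) of the nonempty word w *)
Definition is_power (v w : list letter) : Prop :=
  w <> nil /\ (length w <= length v)%nat /\
  forall k : nat, (k < length v)%nat -> nth k v A = nth (k mod length w) w A.

(* ind(u) = +infinity : the set of exponents r = |v|/|w| of factors v = w^r
   (over all nonempty factors w) is unbounded *)
Definition index_infinite (u : nat -> letter) : Prop :=
  forall M : R, exists v w : list letter,
    factor u w /\ factor u v /\ is_power v w /\
    M < INR (length v) / INR (length w).

Fixpoint cf_rem (eps : R) (n : nat) : R :=
  match n with
  | O => eps
  | S m => / cf_rem eps m - IZR (floorR (/ cf_rem eps m))
  end.

(* partial quotients: eps = [0; a_1, a_2, ...], a_{n+1} = floor(1/x_n) *)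
Definition cf_pq (eps : R) (n : nat) : Z := floorR (/ cf_rem eps (n - 1)).

(* Main.v *)
Require Import Defs.
From Stdlib Require Import Reals List Arith ZArith Lia Lra Psatz Classical.
Open Scope R_scope.


Lemma floorR_spec x : IZR (floorR x) <= x < IZR (floorR x) + 1.
Proof. unfold floorR. destruct (archimed x) as [H1 H2]. rewrite minus_IZR.
  change (IZR 1) with 1. lra. Qed.

Lemma int_small (z:Z) : -1 < IZR z < 1 -> z = 0%Z.
Proof. intros [H1 H2]. change 1 with (IZR 1) in H2. change (-1) with (IZR (-1)) in H1.
  apply lt_IZR in H1; apply lt_IZR in H2. lia. Qed.

Lemma irr_step x : 0 < x < 1 -> irrational x ->
  0 < /x - IZR (floorR (/x)) < 1 /\ irrational (/x - IZR (floorR (/x))).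
Proof.
  intros Hx Hi. set (f := floorR (/x)). destruct (floorR_spec (/x)) as [F1 F2]. fold f in F1, F2.
  assert (Hirr : irrational (/x - IZR f)).
  { intros [p [q [Hq E]]]. apply Hi.
    assert (Hqr : IZR q <> 0) by (apply not_0_IZR; auto).
    assert (E2 : /x = (IZR p + IZR f * IZR q) / IZR q).
    { replace (/x) with (IZR p / IZR q + IZR f) by lra. field; auto. }
    destruct (Z.eq_dec (p + f*q) 0) as [Hz|Hz].
    - exfalso. assert (IZR (p + f*q) = 0) by (rewrite Hz; reflexivity).
      rewrite plus_IZR, mult_IZR in H. rewrite H in E2. assert (0 < /x) by (apply Rinv_0_lt_compat; lra).
      unfold Rdiv in E2. rewrite Rmult_0_l in E2. lra.
    - exists q, (p + f*q)%Z. split; auto.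
      assert (Hr : IZR (p + f*q) <> 0) by (apply not_0_IZR; auto).
      rewrite plus_IZR, mult_IZR in Hr |- *.
      rewrite <- (Rinv_inv x), E2. field. auto. }
  split; [|exact Hirr]. split; [|lra].
  destruct (Rle_lt_or_eq_dec 0 (/x - IZR f)) as [h|h]; [lra|exact h|].
  exfalso. apply Hirr. exists 0%Z, 1%Z. split; [lia|]. rewrite <- h. simpl. field.
Qed.

Lemma cf_rem_prop eps : 0<eps<1 -> irrational eps -> forall k,
  0 < cf_rem eps k < 1 /\ irrational (cf_rem eps k).
Proof. intros H1 H2. induction k as [|k [IH1 IH2]]; simpl; auto. apply irr_step; auto. Qed.

Definition aq eps k := floorR (/ cf_rem eps k).

Lemma aq_ge1 eps : 0<eps<1 -> irrational eps -> forall k, (1 <= aq eps k)%Z.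
Proof. intros H1 H2 k. destruct (cf_rem_prop eps H1 H2 k) as [[h1 h2] _].
  unfold aq. destruct (floorR_spec (/ cf_rem eps k)) as [F1 F2].
  assert (1 < / cf_rem eps k). { rewrite <- Rinv_1. apply Rinv_lt_contravar; lra. }
  assert (0 < IZR (floorR (/ cf_rem eps k))) by lra. apply lt_IZR in H0. lia. Qed.

Lemma cf_rem_S eps k : cf_rem eps (S k) = / cf_rem eps k - IZR (aq eps k).
Proof. reflexivity. Qed.

Lemma cf_pq_S eps k : cf_pq eps (S k) = aq eps k.
Proof. unfold cf_pq, aq. simpl. rewrite Nat.sub_0_r. reflexivity. Qed.

Fixpoint st eps (k : nat) : Z*Z*Z*Z*R*R :=
  match k with
  | O => (0%Z, 1%Z, 1%Z, 0%Z, 1, eps)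
  | S k => let '(q0,q1,p0,p1,b0,b1) := st eps k in
           (q1, (aq eps k * q1 + q0)%Z, p1, (aq eps k * p1 + p0)%Z, b1, b1 * cf_rem eps (S k))
  end.

Definition Inv eps k (s : Z*Z*Z*Z*R*R) : Prop :=
  let '(q0,q1,p0,p1,b0,b1) := s in
  b1 = b0 * cf_rem eps k /\ 0 < b0 /\
  IZR q1 * eps - IZR p1 = (-1)^k * b1 /\
  IZR q0 * eps - IZR p0 = - ((-1)^k * b0) /\
  IZR q1 * b0 + IZR q0 * b1 = 1 /\
  (q0*p1 - q1*p0 = 1 \/ q0*p1 - q1*p0 = -1)%Z /\
  (0 <= q0 <= q1)%Z /\ (1 <= q1)%Z /\ (Z.of_nat k <= q1)%Z /\ (k <> O -> 1 <= q0)%Z.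

Lemma Inv_all eps : 0<eps<1 -> irrational eps -> forall k, Inv eps k (st eps k).
Proof.
  intros H1 H2. induction k as [|k IH].
  - simpl. repeat split; try lra; try lia; try (right; lia); try (simpl; ring).
  - simpl. destruct (st eps k) as [[[[[q0 q1] p0] p1] b0] b1].
    destruct IH as (E1 & Hb0 & D1 & D0 & U & Dt & Q1 & Q2 & Q3 & Q4).
    pose proof (aq_ge1 eps H1 H2 k) as Ha.
    destruct (cf_rem_prop eps H1 H2 k) as [[x1 x2] _].
    destruct (cf_rem_prop eps H1 H2 (S k)) as [[y1 y2] _].
    rewrite cf_rem_S in *. set (x := cf_rem eps k) in *. set (a := aq eps k) in *.
    assert (Key : b1 * (/x - IZR a) = b0 - IZR a * b1).
    { rewrite E1. field. lra. }
    assert (Hb1 : 0 < b1) by (rewrite E1; nra).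
    change (IZR (floorR (/x))) with (IZR a).
    repeat split.
    + exact Hb1.
    + rewrite plus_IZR, mult_IZR, plus_IZR, mult_IZR. rewrite Key. simpl.
      replace ((IZR a * IZR q1 + IZR q0) * eps - (IZR a * IZR p1 + IZR p0))
        with (IZR a * (IZR q1 * eps - IZR p1) + (IZR q0 * eps - IZR p0)) by ring.
      rewrite D1, D0. ring.
    + rewrite D1. simpl. ring.
    + rewrite plus_IZR, mult_IZR, Key.
      replace ((IZR a * IZR q1 + IZR q0) * b1 + IZR q1 * (b0 - IZR a * b1))
       with (IZR q1 * b0 + IZR q0 * b1) by ring. exact U.
    + destruct Dt as [Dt|Dt]; [right|left]; nia.
    + lia.
    + nia.
    + nia.
    + destruct k; [simpl; nia|]. assert (1 <= q0)%Z by (apply Q4; lia). rewrite Nat2Z.inj_succ. nia.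
    + intros _. lia.
Qed.


Lemma le_div_of (x a k : R) : 0 < k -> x * k <= a -> x <= a / k.
Proof. intros Hk H. apply Rmult_le_reg_r with k; auto. unfold Rdiv.
  rewrite Rmult_assoc, Rinv_l by lra. lra. Qed.

Lemma cross_Z (f : nat -> Z) (N : Z) : (f O <= N)%Z -> forall K, (N < f K)%Z ->
  exists k, (f k <= N < f (S k))%Z.
Proof. intros H0 K. induction K as [|K IH]; intros HK; [lia|].
  destruct (Z_le_gt_dec (f K) N) as [h|h]; [exists K; lia| apply IH; lia]. Qed.

Lemma sign_cases k : (-1)^k = 1 \/ (-1)^k = -1.
Proof. induction k as [|k [IH|IH]]; simpl; [left; lra| right; rewrite IH; lra | left; rewrite IH; lra]. Qed.

Lemma INR_to_nat (z : Z) : (0 <= z)%Z -> INR (Z.to_nat z) = IZR z.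
Proof. intros H. rewrite INR_IZR_INZ, Z2Nat.id; auto. Qed.

Definition Qk eps k := let '(q0,q1,p0,p1,b0,b1) := st eps k in q1.
Definition Sk eps k := let '(q0,q1,p0,p1,b0,b1) := st eps k in (q0 + q1)%Z.


Lemma lower_bound (eps : R) (M : Z) (Heps : 0 < eps < 1) (Hirr : irrational eps) (HM : forall k, (aq eps k <= M)%Z) (N : nat) (p : Z) : (1 <= N)%nat ->
  1 / ((IZR M + 2) * INR N) <= Rabs (INR N * eps - IZR p).
Proof.
  intros HN.
  destruct (cross_Z (Qk eps) (Z.of_nat N)) with (K := S N) as [k [Hk1 Hk2]].
  { unfold Qk. simpl. lia. }
  { pose proof (Inv_all eps Heps Hirr (S N)) as I. unfold Qk.
    destruct (st eps (S N)) as [[[[[q0 q1] p0] p1] b0] b1]. simpl in I. lia. }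
  pose proof (Inv_all eps Heps Hirr k) as I0.
  pose proof (Inv_all eps Heps Hirr (S k)) as I1.
  pose proof (HM k) as Ha. pose proof (aq_ge1 eps Heps Hirr k) as Ha1.
  destruct (cf_rem_prop eps Heps Hirr (S k)) as [[x1 x2] _].
  unfold Qk in Hk1, Hk2. simpl st in I1, Hk2.
  destruct (st eps k) as [[[[[q0 q1] p0] p1] b0] b1].
  set (a := aq eps k) in *. set (q2 := (a*q1+q0)%Z) in *. set (p2 := (a*p1+p0)%Z) in *.
  set (b2 := b1 * cf_rem eps (S k)) in *.
  destruct I0 as (E1 & Hb0 & D1 & D0 & U & Dt & Q1 & Q2 & Q3 & Q4).
  destruct I1 as (E1' & Hb1 & D1' & D0' & U' & Dt' & Q1' & Q2' & Q3' & Q4').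
  change (b1 * (/ cf_rem eps k - IZR (floorR (/ cf_rem eps k)))) with b2 in *.
  set (Nz := Z.of_nat N) in *.
  set (d := (q1*p2 - q2*p1)%Z) in *.
  assert (Hd : (d*d = 1)%Z) by (destruct Dt' as [h|h]; rewrite h; reflexivity).
  set (al := (d*(Nz*p2 - p*q2))%Z). set (be := (d*(p*q1 - Nz*p1))%Z).
  assert (EN : Nz = (al*q1 + be*q2)%Z).
  { unfold al, be. transitivity (Nz * (d*d))%Z; [lia|]. unfold d. ring. }
  assert (EP : p = (al*p1 + be*p2)%Z).
  { unfold al, be. transitivity (p * (d*d))%Z; [lia|]. unfold d. ring. }
  assert (Hb2 : 0 < b2 <= b1) by (unfold b2; split; nra).
  assert (Cases : ((1 <= al)%Z /\ (be <= 0)%Z) \/ ((al <= -1)%Z /\ (1 <= be)%Z)).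
  { destruct (Z_le_gt_dec 1 be) as [h|h].
    - right. split; [|lia]. destruct (Z_le_gt_dec 0 al) as [h2|h2]; [|lia]. exfalso.
      assert (0 <= al*q1)%Z by (apply Z.mul_nonneg_nonneg; lia).
      assert (q2 <= be*q2)%Z by (rewrite <- (Z.mul_1_l q2) at 1; apply Z.mul_le_mono_nonneg_r; lia).
      lia.
    - left. split; [|lia].
      assert (be*q2 <= 0)%Z by (apply Z.mul_nonpos_nonneg; lia).
      destruct (Z_le_gt_dec 1 al) as [h2|h2]; [exact h2|].
      assert (al*q1 <= 0)%Z by (apply Z.mul_nonpos_nonneg; lia). lia. }
  assert (Hexp : INR N * eps - IZR p = (-1)^(S k) * (IZR be * b2 - IZR al * b1)).
  { rewrite INR_IZR_INZ. fold Nz. rewrite EN, EP. rewrite !plus_IZR, !mult_IZR.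
    replace ((IZR al * IZR q1 + IZR be * IZR q2) * eps - (IZR al * IZR p1 + IZR be * IZR p2))
      with (IZR al * (IZR q1 * eps - IZR p1) + IZR be * (IZR q2 * eps - IZR p2)) by ring.
    rewrite D1', D0'. unfold b2. simpl cf_rem. ring. }
  assert (Hge : b1 <= Rabs (INR N * eps - IZR p)).
  { rewrite Hexp, Rabs_mult, pow_1_abs, Rmult_1_l.
    destruct Cases as [[c1 c2]|[c1 c2]]; apply IZR_le in c1; apply IZR_le in c2;
    unfold Rabs; destruct (Rcase_abs _); nra. }
  assert (Hq2 : (q2 + q1 <= (M+2)*q1)%Z).
  { unfold q2. assert (a*q1 <= M*q1)%Z by (apply Z.mul_le_mono_nonneg_r; lia). lia. }
  assert (Hq1N : (q1 <= Nz)%Z) by lia.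
  apply IZR_le in Hq2. apply IZR_le in Hq1N. rewrite plus_IZR, mult_IZR, plus_IZR in Hq2.
  change (IZR 2) with 2 in Hq2.
  assert (HNr : INR N = IZR Nz) by (unfold Nz; apply INR_IZR_INZ).
  assert (1 <= IZR q1) by (apply IZR_le; lia).
  assert (0 <= IZR M) by (apply IZR_le; lia).
  assert (H1 : 1 <= (IZR q2 + IZR q1) * b1) by nra.
  assert (H2 : (IZR q2 + IZR q1) * b1 <= (IZR M + 2) * IZR q1 * b1) by nra.
  assert (H3 : (IZR M + 2) * IZR q1 * b1 <= (IZR M + 2) * IZR Nz * b1).
  { apply Rmult_le_compat_r; [lra|]. apply Rmult_le_compat_l; lra. }
  assert (Hkey : 1 <= b1 * ((IZR M + 2) * INR N)) by (rewrite HNr; nra).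
  apply Rle_trans with b1; [|exact Hge].
  unfold Rdiv. rewrite Rmult_1_l. rewrite <- (Rmult_1_l (/ _)).
  apply Rle_trans with (b1 * ((IZR M + 2) * INR N) * / ((IZR M + 2) * INR N)).
  - apply Rmult_le_compat_r; [|exact Hkey]. left; apply Rinv_0_lt_compat. nra.
  - right. field. split; [|lra]. apply not_0_INR. lia.
Qed.


Lemma cross_R (f : nat -> R) (b T : R) : f O <= T -> (forall j, f j <= f (S j) <= f j + b) ->
  forall j, T <= f j -> exists j', T <= f j' <= T + b.
Proof.
  intros H0 Hs j. induction j as [|j IH]; intros Hj.
  - exists O. destruct (Hs O). lra.
  - destruct (Rle_dec T (f j)) as [h|h]; [apply IH; exact h|].
    exists (S j). destruct (Hs j). lra.
Qed.

Lemma INR_to_nat_ge (z : Z) : IZR z <= INR (Z.to_nat z).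
Proof. destruct (Z_le_gt_dec 0 z) as [h|h].
  - rewrite INR_to_nat; auto. lra.
  - pose proof (pos_INR (Z.to_nat z)). assert (IZR z < 0) by (apply IZR_lt; lia). lra. Qed.

Lemma grow (f : nat -> R) c : 0 < c -> (forall j, f j + c <= f (S j)) -> forall T, exists j, T <= f j.
Proof.
  intros Hc Hs T.
  assert (Hl : forall j, f O + INR j * c <= f j).
  { induction j as [|j IH]; [simpl; lra|]. rewrite S_INR. specialize (Hs j). lra. }
  set (r := (T - f O)/c).
  exists (Z.to_nat (up r)).
  pose proof (INR_to_nat_ge (up r)). destruct (archimed r) as [A1 _].
  specialize (Hl (Z.to_nat (up r))).
  assert (T - f O <= INR (Z.to_nat (up r)) * c).
  { replace (T - f O) with (r * c) by (unfold r; field; lra). apply Rmult_le_compat_r; lra. }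
  lra.
Qed.

Fixpoint wn (u v : nat) (j : nat) : nat :=
  match j with O => O | S j => let n := wn u v j in if Nat.ltb n v then (n + u)%nat else (n - v)%nat end.
Fixpoint ww (u v : nat) (s b c y : R) (j : nat) : R :=
  match j with O => y | S j => ww u v s b c y j + s * (if Nat.ltb (wn u v j) v then b else c) end.

Lemma walk (g b c s : R) (u v : nat) (P P' : Z) : 0 < c -> c <= b -> (s = 1 \/ s = -1) ->
  INR u * g - IZR P = s * b -> INR v * g - IZR P' = - (s * c) -> (1 <= v)%nat ->
  forall y t, exists n, (n < u + v)%nat /\ exists m : Z, t <= y + INR n * g + IZR m <= t + b.
Proof.
  intros Hc Hcb Hs EP EP' Hv y t.
  assert (Inv : forall j, (wn u v j < u + v)%nat /\ exists m : Z, ww u v s b c y j = y + INR (wn u v j) * g + IZR m).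
  { induction j as [|j [IH1 [m IH2]]].
    - simpl. split; [lia|]. exists 0%Z. simpl. ring.
    - simpl. destruct (Nat.ltb_spec (wn u v j) v) as [h|h].
      + split; [lia|]. exists (m - P)%Z. rewrite IH2, plus_INR, minus_IZR.
        replace (s*b) with (INR u * g - IZR P) by lra. ring.
      + split; [lia|]. exists (m + P')%Z. rewrite IH2, minus_INR by lia. rewrite plus_IZR.
        replace (s*c) with (-(INR v * g - IZR P')) by lra. ring. }
  assert (Step : forall j, c <= s * (ww u v s b c y (S j) - ww u v s b c y j) <= b).
  { intros j. simpl. destruct (Nat.ltb (wn u v j) v); destruct Hs as [-> | ->]; lra. }
  destruct Hs as [Hs|Hs].
  - subst s. set (T := t + IZR (up (y - t))).
    destruct (archimed (y - t)) as [A1 _].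
    assert (Hf : forall j, ww u v 1 b c y j <= ww u v 1 b c y (S j) <= ww u v 1 b c y j + b).
    { intros j; specialize (Step j); lra. }
    destruct (grow (ww u v 1 b c y) c Hc) with (T := T) as [j Hj].
    { intros j'; specialize (Step j'); lra. }
    destruct (cross_R (ww u v 1 b c y) b T) with (j := j) as [j' Hj']; auto.
    { simpl. unfold T. lra. }
    destruct (Inv j') as [Hn [m Hm]]. exists (wn u v j'). split; auto.
    exists (m - up (y - t))%Z. rewrite minus_IZR. unfold T in Hj'. lra.
  - subst s. set (f := fun j => - ww u v (-1) b c y j).
    set (T := - (t + b) + IZR (up (t + b - y))).
    destruct (archimed (t + b - y)) as [A1 _].
    assert (Hf : forall j, f j <= f (S j) <= f j + b).
    { intros j; specialize (Step j); unfold f; lra. }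
    destruct (grow f c Hc) with (T := T) as [j Hj].
    { intros j'; specialize (Step j'); unfold f; lra. }
    destruct (cross_R f b T) with (j := j) as [j' Hj']; auto.
    { unfold f; simpl. unfold T. lra. }
    destruct (Inv j') as [Hn [m Hm]]. exists (wn u v j'). split; auto.
    exists (m + up (t + b - y))%Z. rewrite plus_IZR. unfold T, f in Hj'. lra.
Qed.


Lemma cover (eps : R) (M : Z) (Heps : 0 < eps < 1) (Hirr : irrational eps) (HM : forall k, (aq eps k <= M)%Z) (K : nat) : (1 <= K)%nat -> forall y t, exists n, (n < K)%nat /\
  exists m : Z, t <= y - INR n * eps + IZR m <= t + (IZR M + 2) / INR K.
Proof.
  intros HK y t.
  destruct (cross_Z (Sk eps) (Z.of_nat K)) with (K := S K) as [k [Hk1 Hk2]].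
  { unfold Sk. simpl. lia. }
  { pose proof (Inv_all eps Heps Hirr (S K)) as I. unfold Sk.
    destruct (st eps (S K)) as [[[[[q0 q1] p0] p1] b0] b1]. simpl in I. lia. }
  pose proof (Inv_all eps Heps Hirr k) as I0.
  pose proof (HM k) as Ha. pose proof (aq_ge1 eps Heps Hirr k) as Ha1.
  destruct (cf_rem_prop eps Heps Hirr k) as [[x1 x2] _].
  unfold Sk in Hk1, Hk2. simpl st in Hk2.
  destruct (st eps k) as [[[[[q0 q1] p0] p1] b0] b1].
  set (a := aq eps k) in *.
  destruct I0 as (E1 & Hb0 & D1 & D0 & U & Dt & Q1 & Q2 & Q3 & Q4).
  assert (Hb1 : 0 < b1 <= b0) by (rewrite E1; split; nra).
  destruct (walk (-eps) b0 b1 ((-1)^k) (Z.to_nat q0) (Z.to_nat q1) (-p0) (-p1)) with (y := y) (t := t)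
    as [n [Hn [m Hm]]].
  - lra.
  - lra.
  - apply sign_cases.
  - rewrite INR_to_nat by lia. rewrite opp_IZR. lra.
  - rewrite INR_to_nat by lia. rewrite opp_IZR. lra.
  - lia.
  - exists n. split; [lia|]. exists m. split; [lra|].
    assert (HKr : 0 < INR K) by (apply lt_0_INR; lia).
    assert (b0 <= (IZR M + 2) / INR K); [|lra].
    apply le_div_of; auto.
    assert (Hq : (Z.of_nat K < (M + 2) * q1)%Z).
    { assert (a*q1 <= M*q1)%Z by (apply Z.mul_le_mono_nonneg_r; lia). lia. }
    apply IZR_lt in Hq. rewrite <- INR_IZR_INZ in Hq. rewrite mult_IZR, plus_IZR in Hq.
    change (IZR 2) with 2 in Hq.
    assert (0 <= IZR q0) by (apply IZR_le; lia).
    assert (IZR q1 * b0 <= 1) by nra.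
    assert (0 <= IZR M) by (apply IZR_le; lia).
    nra.
Qed.


Definition nu (L : letter) : nat := match L with A => 1%nat | B => 2%nat | _ => 1%nat end.
Definition io (L : letter) : Z := match L with A => 1%Z | B => 1%Z | _ => 0%Z end.

Lemma T3_eq eps l x : T3 eps l x = x - INR (nu (letter_of eps l x)) * eps + IZR (io (letter_of eps l x)).
Proof. unfold T3, letter_of. destruct (Rlt_dec x (l - 1 + eps)); [|destruct (Rlt_dec x eps)];
  simpl; ring. Qed.

Lemma letter_B eps l x : letter_of eps l x = B -> l - 1 + eps <= x < eps.
Proof. unfold letter_of. destruct (Rlt_dec x (l - 1 + eps)); [discriminate|].
  destruct (Rlt_dec x eps); [|discriminate]. intros _. lra. Qed.

Lemma T3_range eps l x : 0 < eps < 1 -> Rmax eps (1 - eps) < l -> l < 1 ->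
  0 <= x < l -> 0 <= T3 eps l x < l.
Proof. intros He Hm Hl Hx. pose proof (Rmax_l eps (1-eps)). pose proof (Rmax_r eps (1-eps)).
  unfold T3. destruct (Rlt_dec x (l - 1 + eps)); [lra|]. destruct (Rlt_dec x eps); lra. Qed.

Lemma iter_range eps l n x : 0 < eps < 1 -> Rmax eps (1 - eps) < l -> l < 1 ->
  0 <= x < l -> 0 <= Nat.iter n (T3 eps l) x < l.
Proof. intros He Hm Hl Hx. induction n as [|n IH]; simpl; auto. apply T3_range; auto. Qed.

Lemma iter_form eps l n x : exists N I, (n <= N <= 2*n)%nat /\
  Nat.iter n (T3 eps l) x = x - INR N * eps + IZR I.
Proof. induction n as [|n [N [I [HN E]]]].
  - exists O, 0%Z. simpl. split; [lia|ring].
  - exists (N + nu (letter_of eps l (Nat.iter n (T3 eps l) x)))%nat,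
      (I + io (letter_of eps l (Nat.iter n (T3 eps l) x)))%Z.
    split. { destruct (letter_of eps l (Nat.iter n (T3 eps l) x)); simpl; lia. }
    simpl. rewrite T3_eq. rewrite E at 1. rewrite plus_INR, plus_IZR. ring. Qed.

Lemma same_mod (p q : R) (z : Z) : 0 <= p < 1 -> 0 <= q < 1 -> p - q = IZR z -> p = q.
Proof. intros Hp Hq E. assert (z = 0%Z) by (apply int_small; lra). subst. simpl in E. lra. Qed.

Lemma rot_T eps l y : 0 < eps < 1 -> Rmax eps (1 - eps) < l -> l < 1 -> 0 <= y < l ->
  forall k, exists Nk I, (k <= Nk)%nat /\ Nat.iter k (T3 eps l) y = y - INR Nk * eps + IZR I /\
   forall n, (n < Nk)%nat -> forall m : Z, 0 <= y - INR n * eps + IZR m < l ->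
     exists j, (j < k)%nat /\ Nat.iter j (T3 eps l) y = y - INR n * eps + IZR m.
Proof.
  intros He Hm Hl Hy k. induction k as [|k [Nk [I [HN [E H]]]]].
  - exists O, 0%Z. split; [lia|]. split; [simpl; ring|]. intros n Hn; lia.
  - set (z := Nat.iter k (T3 eps l) y) in *.
    assert (Hz : 0 <= z < l) by (apply iter_range; auto).
    exists (Nk + nu (letter_of eps l z))%nat, (I + io (letter_of eps l z))%Z.
    split. { destruct (letter_of eps l z); simpl; lia. }
    split. { simpl. fold z. rewrite T3_eq. rewrite E at 1. rewrite plus_INR, plus_IZR. ring. }
    intros n Hn m Hp.
    destruct (Nat.lt_ge_cases n Nk) as [h|h].
    + destruct (H n h m Hp) as [j [Hj Ej]]. exists j. split; [lia|exact Ej].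
    + destruct (Nat.eq_dec n Nk) as [e|e].
      * subst n. exists k. split; [lia|]. fold z. apply same_mod with (z := (I - m)%Z); try lra.
        rewrite E, minus_IZR. ring.
      * exfalso. destruct (letter_of eps l z) eqn:HL; simpl in Hn; try lia.
        assert (n = S Nk) by lia. subst n. apply letter_B in HL.
        assert (z + 1 - eps = y - INR (S Nk) * eps + IZR m).
        { apply same_mod with (z := (I + 1 - m)%Z); try lra.
          rewrite E, S_INR, minus_IZR, plus_IZR. simpl. ring. }
        lra.
Qed.

Lemma rot_hit eps l y : 0 < eps < 1 -> Rmax eps (1 - eps) < l -> l < 1 -> 0 <= y < l ->
  forall n (m : Z), 0 <= y - INR n * eps + IZR m < l ->
  exists j, (j <= n)%nat /\ Nat.iter j (T3 eps l) y = y - INR n * eps + IZR m.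
Proof. intros He Hm Hl Hy n m Hp. destruct (rot_T eps l y He Hm Hl Hy (S n)) as [Nk [I [HN [_ H]]]].
  destruct (H n ltac:(lia) m Hp) as [j [Hj E]]. exists j. split; [lia|exact E]. Qed.

Lemma cov_T eps l y M : 0 < eps < 1 -> irrational eps -> (forall k, (aq eps k <= M)%Z) ->
  Rmax eps (1 - eps) < l -> l < 1 -> 0 <= y < l ->
  forall K, (1 <= K)%nat -> forall t, 0 <= t -> t + (IZR M + 2) / INR K < l ->
  exists j, (j < K)%nat /\ t <= Nat.iter j (T3 eps l) y <= t + (IZR M + 2) / INR K.
Proof.
  intros He Hi HM Hm Hl Hy K HK t Ht Htl.
  destruct (cover eps M He Hi HM K HK y t) as [n [Hn [m Hmm]]].
  destruct (rot_hit eps l y He Hm Hl Hy n m) as [j [Hj E]]; [lra|].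
  exists j. split; [lia|]. rewrite E. lra.
Qed.


Theorem proposition1 (eps l x0 : R) :
  0 < eps < 1 -> irrational eps ->
  Rmax eps (1 - eps) < l -> l < 1 ->
  0 <= x0 < l ->
  index_infinite (iet3_word eps l x0) ->
  forall N : Z, exists n : nat, (1 <= n)%nat /\ (N < cf_pq eps n)%Z.
Proof.
  intros He Hi Hm Hl Hx0 Hind.
  apply NNPP. intro Hneg. apply not_all_ex_not in Hneg. destruct Hneg as [M HM0].
  assert (HM : forall k, (aq eps k <= M)%Z).
  { intros k. rewrite <- cf_pq_S. destruct (Z_le_gt_dec (cf_pq eps (S k)) M) as [h|h]; auto.
    exfalso. apply HM0. exists (S k). split; [lia|lia]. }
  pose proof (aq_ge1 eps He Hi O) as Ha. pose proof (HM O).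
  set (Cc := IZR M + 2).
  assert (HC : 3 <= Cc) by (unfold Cc; assert (1 <= IZR M) by (apply IZR_le; lia); lra).
  destruct (Hind (2 * Cc * Cc + 3)) as [v [w [_ [[i Hfac] [[Hw [Hlen Hper]] Hratio]]]]].
  set (L := length v) in *. set (m := length w) in *.
  assert (Hm1 : (1 <= m)%nat) by (unfold m; destruct w; [congruence|simpl; lia]).
  assert (Hmr : 0 < INR m) by (apply lt_0_INR; lia).
  assert (HLr : INR L > (2 * Cc * Cc + 3) * INR m).
  { apply Rmult_lt_compat_r with (r := INR m) in Hratio; auto.
    replace (INR L / INR m * INR m) with (INR L) in Hratio by (field; lra). lra. }
  set (T := T3 eps l).
  set (y0 := Nat.iter i T x0).
  set (z := fun k => Nat.iter k T y0).
  assert (Hu : forall k, iet3_word eps l x0 (i + k) = letter_of eps l (z k)).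
  { intros k. unfold iet3_word, z, y0. rewrite Nat.add_comm, Nat.iter_add. reflexivity. }
  assert (Hper2 : forall k, (k + m < L)%nat -> letter_of eps l (z k) = letter_of eps l (z (k + m)%nat)).
  { intros k Hk. rewrite <- !Hu. rewrite <- Hfac by lia. rewrite <- Hfac by lia.
    rewrite Hper by lia. rewrite Hper by lia. f_equal.
    rewrite <- (Nat.mul_1_l m) at 2. symmetry. apply Nat.Div0.mod_add. }
  assert (Hy0 : 0 <= y0 < l) by (apply iter_range; auto).
  assert (Hz : forall k, 0 <= z k < l) by (intros k; apply iter_range; auto).
  set (delta := z m - z O).
  assert (Hconst : forall k, (k + m <= L)%nat -> z (k + m)%nat - z k = delta).
  { induction k as [|k IH]; intros Hk; [reflexivity|].
    rewrite <- IH by lia. unfold z. simpl Nat.iter at 1 2.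
    replace (S k + m)%nat with (S (k + m)) by lia. simpl Nat.iter.
    fold (z (k+m)%nat) (z k). unfold T. rewrite !T3_eq.
    rewrite <- Hper2 by lia. ring. }
  destruct (iter_form eps l m y0) as [Nn [I [HN EN]]].
  assert (Hdl : 1 / (Cc * INR Nn) <= Rabs delta).
  { replace delta with (- (INR Nn * eps - IZR I)).
    - rewrite Rabs_Ropp. apply lower_bound with (M := M); auto. lia.
    - unfold delta, z, T. rewrite EN. simpl. ring. }
  assert (HNr : 0 < INR Nn) by (apply lt_0_INR; lia).
  assert (HN2 : INR Nn <= 2 * INR m).
  { replace 2 with (INR 2) by (simpl; ring). rewrite <- mult_INR. apply le_INR. lia. }
  assert (H1 : 1 <= Rabs delta * (Cc * INR Nn)).
  { apply Rmult_le_compat_r with (r := Cc * INR Nn) in Hdl; [|nra].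
    replace (1 / (Cc * INR Nn) * (Cc * INR Nn)) with 1 in Hdl by (field; lra). exact Hdl. }
  set (K := (L - m + 1)%nat).
  assert (HmL : (m <= L)%nat).
  { apply INR_le. nra. }
  assert (HKr : INR K = INR L - INR m + 1).
  { unfold K. rewrite plus_INR, minus_INR by lia. simpl. ring. }
  assert (HK0 : 0 < INR K) by nra.
  assert (HK1 : (1 <= K)%nat) by (unfold K; lia).
  assert (Hdu : Rabs delta <= Cc / INR K).
  { destruct (Rle_dec (Rabs delta) (Cc / INR K)) as [h|h]; auto. exfalso.
    apply Rnot_le_lt in h.
    assert (Hdm : delta < l /\ - delta < l) by (unfold delta; pose proof (Hz m); pose proof (Hz O); lra).
    unfold Rabs in h. destruct (Rcase_abs delta) as [hd|hd].
    - destruct (cov_T eps l y0 M He Hi HM Hm Hl Hy0 K HK1 0) as [j [Hj Hzj]]; [lra|unfold Cc in h; lra|].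
      pose proof (Hconst j ltac:(unfold K in Hj; lia)). pose proof (Hz (j + m)%nat).
      unfold z, T in *. unfold Cc in h. lra.
    - destruct (cov_T eps l y0 M He Hi HM Hm Hl Hy0 K HK1 (l - delta)) as [j [Hj Hzj]]; [lra|unfold Cc in h; lra|].
      pose proof (Hconst j ltac:(unfold K in Hj; lia)). pose proof (Hz (j + m)%nat).
      unfold z, T in *. unfold Cc in h. lra. }
  assert (H2 : Rabs delta * INR K <= Cc).
  { apply Rmult_le_compat_r with (r := INR K) in Hdu; [|lra].
    replace (Cc / INR K * INR K) with Cc in Hdu by (field; lra). exact Hdu. }
  assert (H3 : INR K <= Cc * Cc * INR Nn).
  { assert (INR K * 1 <= INR K * (Rabs delta * (Cc * INR Nn))) by (apply Rmult_le_compat_l; lra).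
    assert (INR K * (Rabs delta * (Cc * INR Nn)) = (Rabs delta * INR K) * (Cc * INR Nn)) by ring.
    assert ((Rabs delta * INR K) * (Cc * INR Nn) <= Cc * (Cc * INR Nn)) by (apply Rmult_le_compat_r; nra).
    nra. }
  nra.
Qed.
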